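(* Let $P=\mathcal E-i\theta$, with $\theta\in su(N)$, be a rank-one Hermitian projector solving the Euler–Lagrange equations of the $\mathbb CP^{N-1}$ sigma model, and let $\Phi([\theta],\lambda)\in SU(N)$ solve the associated LSP $D_\alpha\Phi=u^\alpha\Phi$, $\alpha=1,2$, where $$u^1=\frac{-2}{1+\lambda}[\theta_1,\theta],\qquad u^2=\frac{-2}{1-\lambda}[\theta_2,\theta].$$ Let $\vec w_C=\big(f(x^1)\theta^j_1+g(x^2)\theta^j_2\big)\partial/\partial\theta^j$ be the generalized vector field associated with a conformal transformation. Then: (i) the $su(N)$-valued immersion function $F=\Phi^{-1}(fu^1+gu^2)\Phi$ has tangent vectors $D_\alpha F=\Phi^{-1}(\mathrm{pr}\,\vec w_Cu^\alpha)\Phi$, $\alpha=1,2$ (i.e. $F$ is the Fokas–Gel'fand immersion function associated with the conformal symmetry); (ii) the infinitesimal deformation $(u^1,u^2,\Phi)\mapsto(u^1,u^2,\Phi)+\epsilon\big(\mathrm{pr}\,\vec w_Cu^1,\ \mathrm{pr}\,\vec w_Cu^2,\ (fu^1+gu^2)\Phi\big)$, where $(fu^1+gu^2)\Phi=\Phi F$, is a symmetry of the Euler–Lagrange equations together with the LSP.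
   Context: $\mathcal E=\mathbb I/N$. Write $\theta=\theta^je_j$ in a basis $e_j$ of $su(N)$; $\theta_1,\theta_2,\theta_{12}$ etc. denote partial derivatives in $x^1,x^2$ and $D_\alpha$ total derivatives, $\lambda$ is the spectral parameter. $P=\mathcal E-i\theta$ being a rank-one Hermitian projector means $P^2=P=P^\dagger$, $\mathrm{rank}\,P=1$. The Euler–Lagrange equations are $[\theta_{12},\theta]=0$, which is equivalent to $D_2u^1-D_1u^2+[u^1,u^2]=0$, the compatibility condition of the LSP. Two settings are considered: Minkowski space, where $x^1=x+t$, $x^2=x-t$, $u^1,u^2\in su(N)$, and $f,g$ are real functions; or Euclidean space, where $x^1=\xi$, $x^2=\bar\xi$ are complex conjugate variables, $(u^1)^\dagger=-u^2$, and $g(x^2)=\overline{f(x^1)}$. The prolongation is $\mathrm{pr}\,\vec w_C=\sum_J D_J(f\theta^j_1+g\theta^j_2)\,\partial/\partial\theta^j_J$. The deformation $(u^1,u^2,\Phi)\mapsto(u^1,u^2,\Phi)+\epsilon(A_1,A_2,\Psi)$ is a symmetry of the E–L equations together with the LSP if $D_2A_1-D_1A_2+[A_1,u^2]+[u^1,A_2]=0$ on solutions, $\Phi^{-1}\Psi\in su(N)$, and $D_\alpha\Psi=u^\alpha\Psi+A_\alpha\Phi$. *)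

(* Defs.v *)
From mathcomp Require Import all_boot all_order all_algebra.
From mathcomp Require Import all_classical all_reals all_analysis.
From mathcomp Require Export complex.
Import GRing.Theory Num.Theory numFieldNormedType.Exports.

Set Implicit Arguments.
Unset Strict Implicit.
Unset Printing Implicit Defensive.

Local Open Scope ring_scope.

(* Points of the plane are (a,b) in R x R.
   Minkowski : a = x, b = t, x^1 = a + b, x^2 = a - b.
   Euclidean : x^1 = xi = a + i b, x^2 = conj xi = a - i b.
   In both cases the total derivatives D_1 = d/dx^1, D_2 = d/dx^2 are
     D_1 = (d_a + c d_b)/2,  D_2 = (d_a - c d_b)/2
   with c = 1 (Minkowski) or c = -i (Euclidean, Wirtinger derivatives). *)
Inductive setting := Minkowski | Euclidean.

Section Defs.
Variable R : realType.
Local Notation C := R[i].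

Definition pa (h : R -> R -> R) : R -> R -> R :=
  fun a b => derive1 (fun s => h s b) a.
Definition pb (h : R -> R -> R) : R -> R -> R :=
  fun a b => derive1 (fun t => h a t) b.

Fixpoint iter_partial (w : seq bool) (h : R -> R -> R) : R -> R -> R :=
  match w with
  | [::] => h
  | d :: w' => (if d then pa else pb) (iter_partial w' h)
  end.

Definition smoothR (h : R -> R -> R) : Prop :=
  forall w : seq bool,
    continuous (fun p : R * R => iter_partial w h p.1 p.2) /\
    (forall a b, derivable (fun s => iter_partial w h s b) a 1 /\
                 derivable (fun t => iter_partial w h a t) b 1).

Definition smoothC (h : R -> R -> C) : Prop :=
  smoothR (fun a b => complex.Re (h a b)) /\
  smoothR (fun a b => complex.Im (h a b)).

Definition smoothM (m n : nat) (F : R -> R -> 'M[C]_(m, n)) : Prop :=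
  forall i j, smoothC (fun a b => F a b i j).

Definition paC (h : R -> R -> C) : R -> R -> C := fun a b =>
  Complex (pa (fun a b => complex.Re (h a b)) a b)
          (pa (fun a b => complex.Im (h a b)) a b).
Definition pbC (h : R -> R -> C) : R -> R -> C := fun a b =>
  Complex (pb (fun a b => complex.Re (h a b)) a b)
          (pb (fun a b => complex.Im (h a b)) a b).

Definition paM (m n : nat) (F : R -> R -> 'M[C]_(m, n)) : R -> R -> 'M[C]_(m, n) :=
  fun a b => \matrix_(i, j) paC (fun a b => F a b i j) a b.
Definition pbM (m n : nat) (F : R -> R -> 'M[C]_(m, n)) : R -> R -> 'M[C]_(m, n) :=
  fun a b => \matrix_(i, j) pbC (fun a b => F a b i j) a b.

Definition coef (s : setting) : C :=
  match s with Minkowski => 1 | Euclidean => - 'i end.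

Definition D1c (s : setting) (h : R -> R -> C) : R -> R -> C :=
  fun a b => 2^-1 * (paC h a b + coef s * pbC h a b).
Definition D2c (s : setting) (h : R -> R -> C) : R -> R -> C :=
  fun a b => 2^-1 * (paC h a b - coef s * pbC h a b).
Definition D1 (s : setting) (m n : nat) (F : R -> R -> 'M[C]_(m, n)) :
  R -> R -> 'M[C]_(m, n) :=
  fun a b => 2^-1 *: (paM F a b + coef s *: pbM F a b).
Definition D2 (s : setting) (m n : nat) (F : R -> R -> 'M[C]_(m, n)) :
  R -> R -> 'M[C]_(m, n) :=
  fun a b => 2^-1 *: (paM F a b - coef s *: pbM F a b).

Definition comm (n : nat) (A B : 'M[C]_n) : 'M[C]_n := A *m B - B *m A.
Definition hadj (m n : nat) (A : 'M[C]_(m, n)) : 'M[C]_(n, m) := (map_mx Num.conj A)^T.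

Definition su (n : nat) : pred 'M[C]_n :=
  fun A => (hadj A == - A) && (\tr A == 0).
Definition SU (n : nat) : pred 'M[C]_n :=
  fun U => (hadj U *m U == 1%:M) && (\det U == 1).
Arguments su n : clear implicits.
Arguments SU n : clear implicits.

Definition projP (n : nat) (th : 'M[C]_n) : 'M[C]_n :=
  (n%:R)^-1%:M - 'i *: th.
Definition rank_one_hermitian_projector (n : nat) (P : 'M[C]_n) : Prop :=
  P *m P = P /\ hadj P = P /\ \rank P = 1%N.

Definition u1 (s : setting) (lam : C) (n : nat) (th : R -> R -> 'M[C]_n) :
  R -> R -> 'M[C]_n :=
  fun a b => (-2 / (1 + lam)) *: comm (D1 s th a b) (th a b).
Definition u2 (s : setting) (lam : C) (n : nat) (th : R -> R -> 'M[C]_n) :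
  R -> R -> 'M[C]_n :=
  fun a b => (-2 / (1 - lam)) *: comm (D2 s th a b) (th a b).

(* characteristic of the conformal generalized vector field
   w_C = (f theta_1 + g theta_2) d/d theta *)
Definition charQ (s : setting) (f g : R -> R -> C) (n : nat)
  (th : R -> R -> 'M[C]_n) : R -> R -> 'M[C]_n :=
  fun a b => f a b *: D1 s th a b + g a b *: D2 s th a b.

(* pr w_C applied to the differential functions u^1[theta], u^2[theta]:
   pr w_C = sum_J D_J(Q^j) d/d theta^j_J, and u^1 depends only (bilinearly)
   on theta and theta_1, u^2 on theta and theta_2, so
   pr w_C u^1 = -2/(1+lam) ([D_1 Q, theta] + [theta_1, Q]),
   pr w_C u^2 = -2/(1-lam) ([D_2 Q, theta] + [theta_2, Q]). *)
Definition prwC_u1 (s : setting) (lam : C) (f g : R -> R -> C) (n : nat)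
  (th : R -> R -> 'M[C]_n) : R -> R -> 'M[C]_n :=
  fun a b => (-2 / (1 + lam)) *:
    (comm (D1 s (charQ s f g th) a b) (th a b) +
     comm (D1 s th a b) (charQ s f g th a b)).
Definition prwC_u2 (s : setting) (lam : C) (f g : R -> R -> C) (n : nat)
  (th : R -> R -> 'M[C]_n) : R -> R -> 'M[C]_n :=
  fun a b => (-2 / (1 - lam)) *:
    (comm (D2 s (charQ s f g th) a b) (th a b) +
     comm (D2 s th a b) (charQ s f g th a b)).

Definition fu_gu (s : setting) (lam : C) (f g : R -> R -> C) (n : nat)
  (th : R -> R -> 'M[C]_n) : R -> R -> 'M[C]_n :=
  fun a b => f a b *: u1 s lam th a b + g a b *: u2 s lam th a b.
Definition immersionF (s : setting) (lam : C) (f g : R -> R -> C) (n : nat)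
  (th Phi : R -> R -> 'M[C]_n) : R -> R -> 'M[C]_n :=
  fun a b => invmx (Phi a b) *m fu_gu s lam f g th a b *m Phi a b.

Definition lsp_reality (s : setting) (lam : C) (n : nat)
  (th : R -> R -> 'M[C]_n) : Prop :=
  match s with
  | Minkowski => forall a b, u1 s lam th a b \in su n /\ u2 s lam th a b \in su n
  | Euclidean => forall a b, hadj (u1 s lam th a b) = - u2 s lam th a b
  end.
Definition fg_reality (s : setting) (f g : R -> R -> C) : Prop :=
  match s with
  | Minkowski => forall a b, f a b \is Num.real /\ g a b \is Num.real
  | Euclidean => forall a b, g a b = Num.conj (f a b)
  end.

Definition is_LSP_symmetry (s : setting) (n : nat)
  (U1 U2 Phi A1 A2 Psi : R -> R -> 'M[C]_n) : Prop :=
  (forall a b, D2 s A1 a b - D1 s A2 a b + comm (A1 a b) (U2 a b)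
               + comm (U1 a b) (A2 a b) = 0) /\
  (forall a b, invmx (Phi a b) *m Psi a b \in su n) /\
  (forall a b, D1 s Psi a b = U1 a b *m Psi a b + A1 a b *m Phi a b) /\
  (forall a b, D2 s Psi a b = U2 a b *m Psi a b + A2 a b *m Phi a b).

End Defs.
Arguments su {R} n.
Arguments SU {R} n.

(* Main.v *)
Require Import Defs.
From mathcomp Require Import all_boot all_order all_algebra.
From mathcomp Require Import all_classical all_reals all_analysis.
From mathcomp Require Import complex ring lra.
Import GRing.Theory Num.Theory numFieldNormedType.Exports.
Import Order.TTheory.
Local Open Scope ring_scope.
Set Implicit Arguments.
Unset Strict Implicit.


Section Real.
Variable R : realType.
Implicit Types h u v : R -> R -> R.

Definition sl (d : bool) h (a b : R) : R -> R :=
  if d then (fun s => h s b) else (fun t => h a t).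
Definition pt (d : bool) (a b : R) := if d then a else b.
Definition pp (d : bool) h : R -> R -> R := if d then pa h else pb h.
Lemma ppE d h a b : pp d h a b = derive1 (sl d h a b) (pt d a b).
Proof. by case: d. Qed.
Definition dR h := forall d a b, derivable (sl d h a b) (pt d a b) 1.

Lemma pp_add d u v : dR u -> dR v ->
  pp d (fun a b => u a b + v a b) = (fun a b => pp d u a b + pp d v a b).
Proof.
move=> du dv; apply: funext => a; apply: funext => b; rewrite !ppE !derive1E.
have -> : sl d (fun a b => u a b + v a b) a b = sl d u a b + sl d v a b by case: d.
by rewrite deriveD.
Qed.

Lemma dR_add u v : dR u -> dR v -> dR (fun a b => u a b + v a b).
Proof.
move=> du dv d a b.
have -> : sl d (fun a b => u a b + v a b) a b = sl d u a b + sl d v a b by case: d.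
exact: derivableD.
Qed.

Lemma pp_mul d u v : dR u -> dR v ->
  pp d (fun a b => u a b * v a b) = (fun a b => pp d u a b * v a b + u a b * pp d v a b).
Proof.
move=> du dv; apply: funext => a; apply: funext => b; rewrite !ppE !derive1E.
have -> : sl d (fun a b => u a b * v a b) a b = sl d u a b * sl d v a b by case: d.
rewrite deriveM //.
have -> : sl d u a b (pt d a b) = u a b by case: d.
have -> : sl d v a b (pt d a b) = v a b by case: d.
by rewrite /GRing.scale /= addrC mulrC.
Qed.

Lemma dR_mul u v : dR u -> dR v -> dR (fun a b => u a b * v a b).
Proof.
move=> du dv d a b.
have -> : sl d (fun a b => u a b * v a b) a b = sl d u a b * sl d v a b by case: d.
exact: derivableM.
Qed.

Lemma pp_opp d u : dR u -> pp d (fun a b => - u a b) = (fun a b => - pp d u a b).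
Proof.
move=> du; apply: funext => a; apply: funext => b; rewrite !ppE !derive1E.
have -> : sl d (fun a b => - u a b) a b = - sl d u a b by case: d.
by rewrite deriveN.
Qed.

Lemma dR_opp u : dR u -> dR (fun a b => - u a b).
Proof.
move=> du d a b.
have -> : sl d (fun a b => - u a b) a b = - sl d u a b by case: d.
exact: derivableN.
Qed.

Lemma pp_cst d (k : R) : pp d (fun _ _ => k) = (fun _ _ => 0).
Proof.
apply: funext => a; apply: funext => b; rewrite !ppE.
have -> : sl d (fun _ _ => k) a b = cst k by case: d.
by rewrite derive1_cst.
Qed.

Lemma dR_cst (k : R) : dR (fun _ _ => k).
Proof.
move=> d a b; have -> : sl d (fun _ _ => k) a b = cst k by case: d.
exact: derivable_cst.
Qed.

End Real.


Section Schwarz.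
Variable R : realType.

Lemma cont_delta (F : R -> R -> R) a b e :
  continuous (fun p : R * R => F p.1 p.2) -> 0 < e ->
  exists2 d, 0 < d & forall x y, `|a - x| < d -> `|b - y| < d -> `|F a b - F x y| < e.
Proof.
move=> Fc e0.
have H := cvg_ball (Fc (a, b)) e0.
have [d /= d0 Hd] := (nbhs_ballP _ _).1 (H _).
exists d => // x y ax bx.
apply: (Hd (x, y)); rewrite /ball /= /prod_ball /=.
by split; rewrite -ball_normE /ball_.
Qed.

Lemma mvt1 (f : R -> R) x y : (forall z, derivable f z 1) -> x < y ->
  exists2 c, x < c < y & f y - f x = derive1 f c * (y - x).
Proof.
move=> fd xy.
have := @MVT R f (derive1 f) x y xy.
case.
- by move=> z _; rewrite derive1E; apply: derivableP.
- apply: continuous_subspaceT => z.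
  exact/differentiable_continuous/derivable1_diffP.
move=> c; rewrite in_itv /= => cxy ->; by exists c.
Qed.

Lemma mvt2 (f : R -> R) x t : (forall z, derivable f z 1) -> 0 < t ->
  exists2 c, x < c < x + t & f (x + t) - f x = derive1 f c * t.
Proof.
move=> fd t0; have [|c cxy E] := @mvt1 f x (x + t) fd; first by lra.
by exists c => //; rewrite E; congr (_ * _); ring.
Qed.

Lemma near_pt (x c t d : R) : x < c < x + t -> t < d -> `|x - c| < d.
Proof. by move=> /andP[h1 h2] td; rewrite ltr0_norm; lra. Qed.

Lemma alg4 (A B C D X Y P Q t : R) : A - B - (C - D) = X * t ->
  A - C - (B - D) = Y * t -> X = P * t -> Y = Q * t -> P * t * t = Q * t * t.
Proof. by move=> e1 e3 e2 e4; rewrite -e2 -e4 -e1 -e3; lra. Qed.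

Lemma alg_cancel (P Q t : R) : P * t * t = Q * t * t -> 0 < t -> P = Q.
Proof.
move=> e t0; have tn : t * t != 0 by rewrite mulf_neq0 // gt_eqF.
by move: e; rewrite -!mulrA => /(mulIf tn).
Qed.

Lemma alg_fin (H1 H2 H1' H2' e : R) : H1' = H2' ->
  `|H1 - H1'| < e / 2 -> `|H2 - H2'| < e / 2 -> `|H2 - H1| < e.
Proof.
move=> EQ B1 B2.
have -> : H2 - H1 = (H2 - H2') + (H1' - H1) by rewrite EQ; lra.
apply: le_lt_trans (ler_normD _ _) _.
rewrite (distrC H1'); lra.
Qed.

Lemma schwarz (h : R -> R -> R) : smoothR h -> forall a b, pa (pb h) a b = pb (pa h) a b.
Proof.
move=> sh a b.
have [c1 _] := sh [:: false; true].
have [c2 _] := sh [:: true; false].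
have [_ d0] := sh [::].
have [_ d1] := sh [:: true].
have [_ d2] := sh [:: false].
rewrite /= in c1 c2 d0 d1 d2.
suff K : forall e, 0 < e -> `|pa (pb h) a b - pb (pa h) a b| < e.
  apply/eqP; rewrite -subr_eq0 -normr_eq0 eq_le normr_ge0 andbT.
  apply/ler_addgt0Pr => e e0; rewrite add0r; apply: ltW; exact: K.
move=> e e0.
have e20 : 0 < e / 2 by rewrite divr_gt0.
have [δ1 δ10 Hδ1] := cont_delta a b c1 e20.
have [δ2 δ20 Hδ2] := cont_delta a b c2 e20.
have m0 : 0 < Num.min δ1 δ2 by rewrite lt_min δ10 δ20.
have m1 : Num.min δ1 δ2 <= δ1 by rewrite ge_min lexx.
have m2 : Num.min δ1 δ2 <= δ2 by rewrite ge_min lexx orbT.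
set t := Num.min δ1 δ2 / 2.
have t0 : 0 < t by rewrite /t; lra.
have t1 : t < δ1 by rewrite /t; lra.
have t2 : t < δ2 by rewrite /t; lra.
have dphi z : derivable (fun s => h s (b + t) - h s b) z 1.
  by apply: derivableB; [exact: (d0 z _).1 | exact: (d0 z _).1].
have [ξ xi E1] := @mvt2 _ a t dphi t0.
have E1' : h (a + t) (b + t) - h (a + t) b - (h a (b + t) - h a b)
    = (pa h ξ (b + t) - pa h ξ b) * t.
  rewrite E1 /pa !(@derive1E R R).
  have -> : (fun s => h s (b + t) - h s b) = (h^~ (b + t)) - (h^~ b) by [].
  by rewrite deriveB //; apply: (d0 _ _).1.
have [η eta E2] := @mvt2 _ b t (fun z => (d1 ξ z).2) t0.
have E2' : pa h ξ (b + t) - pa h ξ b = pb (pa h) ξ η * t := E2.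
have dchi z : derivable (fun y => h (a + t) y - h a y) z 1.
  by apply: derivableB; [exact: (d0 _ z).2 | exact: (d0 _ z).2].
have [η' eta' E3] := @mvt2 _ b t dchi t0.
have E3' : h (a + t) (b + t) - h a (b + t) - (h (a + t) b - h a b)
    = (pb h (a + t) η' - pb h a η') * t.
  rewrite E3 /pb !(@derive1E R R).
  have -> : (fun y => h (a + t) y - h a y) = (h (a + t)) - (h a) by [].
  by rewrite deriveB //; apply: (d0 _ _).2.
have [ξ' xi' E4] := @mvt2 _ a t (fun z => (d2 z η').1) t0.
have E4' : pb h (a + t) η' - pb h a η' = pa (pb h) ξ' η' * t := E4.
have EQ0 := alg4 E1' E3' E2' E4'.
have EQ := alg_cancel EQ0 t0.
have B1 := Hδ1 ξ η (near_pt xi t1) (near_pt eta t1).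
have B2 := Hδ2 ξ' η' (near_pt xi' t2) (near_pt eta' t2).
rewrite /= in B1 B2.
exact: (alg_fin EQ B1 B2).
Qed.
End Schwarz.


Section Good.
Variable R : realType.
Implicit Types h u v : R -> R -> R.

Lemma iter_rcons w d h : iter_partial (rcons w d) h = iter_partial w (pp d h).
Proof. by elim: w => [|d' w IH] /=; [case: d | rewrite IH]. Qed.

End Good.
Section G2.
Variable R : realType.
Implicit Types h u v : R -> R -> R.
Lemma smoothR_pp d h : smoothR h -> smoothR (pp d h).
Proof. by move=> sh w; have := sh (rcons w d); rewrite iter_rcons. Qed.

Lemma smoothR_dR h : smoothR h -> dR h.
Proof.
move=> sh d a b; have [_ H] := sh [::]; have [H1 H2] := H a b.
by case: d; [exact: H1 | exact: H2].
Qed.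


Definition good h := [/\ dR h, (forall d, dR (pp d h)) &
  pp true (pp false h) = pp false (pp true h)].

Lemma smooth_good h : smoothR h -> good h.
Proof.
move=> sh; split.
- exact: smoothR_dR.
- move=> d. apply/smoothR_dR/smoothR_pp. exact: sh.
- apply: funext => a. apply: funext => b. exact: (schwarz sh).
Qed.

Lemma good_add u v : good u -> good v -> good (fun a b => u a b + v a b).
Proof.
move=> [du du' cu] [dv dv' cv]; split.
- exact: dR_add.
- move=> d. rewrite (pp_add d du dv). apply: dR_add. exact: du'. exact: dv'.
- rewrite (pp_add false du dv) (pp_add true (du' false) (dv' false)).
  rewrite (pp_add true du dv) (pp_add false (du' true) (dv' true)).
  rewrite cu cv. reflexivity.
Qed.

Lemma good_opp u : good u -> good (fun a b => - u a b).
Proof.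
move=> [du du' cu]; split.
- exact: dR_opp.
- move=> d; rewrite (pp_opp d du); apply: dR_opp; exact: du'.
- rewrite (pp_opp false du) (pp_opp true (du' false)).
  rewrite (pp_opp true du) (pp_opp false (du' true)).
  rewrite cu; reflexivity.
Qed.

Lemma good_cst (k : R) : good (fun _ _ => k).
Proof.
split; first exact: dR_cst.
- move=> d; rewrite pp_cst; exact: dR_cst.
- rewrite !pp_cst; reflexivity.
Qed.

Lemma alg_mul (A B C D E F U V : R) :
  E * V + B * C + (A * D + U * F) = E * V + A * D + (B * C + U * F).
Proof. ring. Qed.

Lemma good_mul u v : good u -> good v -> good (fun a b => u a b * v a b).
Proof.
move=> [du du' cu] [dv dv' cv].
have dd d : dR (pp d (fun a b => u a b * v a b)).
  rewrite (pp_mul d du dv); apply: dR_add; apply: dR_mul.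
  exact: du'. exact: dv. exact: du. exact: dv'.
split.
- exact: dR_mul.
- exact: dd.
- rewrite (pp_mul false du dv) (pp_mul true du dv).
  rewrite (pp_add true (dR_mul (du' false) dv) (dR_mul du (dv' false))).
  rewrite (pp_add false (dR_mul (du' true) dv) (dR_mul du (dv' true))).
  rewrite (pp_mul true (du' false) dv) (pp_mul true du (dv' false)).
  rewrite (pp_mul false (du' true) dv) (pp_mul false du (dv' true)).
  rewrite cu cv.
  apply: funext => a; apply: funext => b.
  exact: alg_mul.
Qed.
End G2.


Section Cplx.
Variable R : realType.
Local Notation C := R[i].
Implicit Types h k : R -> R -> C.

Definition RI h := fun a b => complex.Re (h a b).
Definition II h := fun a b => complex.Im (h a b).
Definition pC (d : bool) h : R -> R -> C :=
  fun a b => Complex (pp d (RI h) a b) (pp d (II h) a b).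
Lemma pC_true h : paC h = pC true h. Proof. reflexivity. Qed.
Lemma pC_false h : pbC h = pC false h. Proof. reflexivity. Qed.

Definition dC h := dR (RI h) /\ dR (II h).
Definition goodC h := good (RI h) /\ good (II h).

Lemma cplx_eq (x y : C) : complex.Re x = complex.Re y -> complex.Im x = complex.Im y -> x = y.
Proof. by case: x; case: y => ? ? ? ? /= -> ->. Qed.
Lemma ReM (x y : C) : complex.Re (x * y) = complex.Re x * complex.Re y - complex.Im x * complex.Im y.
Proof. by case: x; case: y. Qed.
Lemma ImM (x y : C) : complex.Im (x * y) = complex.Re x * complex.Im y + complex.Im x * complex.Re y.
Proof. by case: x; case: y. Qed.
Lemma ReD (x y : C) : complex.Re (x + y) = complex.Re x + complex.Re y.
Proof. by case: x; case: y. Qed.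
Lemma ImD (x y : C) : complex.Im (x + y) = complex.Im x + complex.Im y.
Proof. by case: x; case: y. Qed.
Lemma ReN (x : C) : complex.Re (- x) = - complex.Re x.
Proof. by case: x. Qed.
Lemma ImN (x : C) : complex.Im (- x) = - complex.Im x.
Proof. by case: x. Qed.

Lemma RI_mul h k : RI (fun a b => h a b * k a b) =
  (fun a b => RI h a b * RI k a b + - (II h a b * II k a b)).
Proof. apply: funext => a; apply: funext => b; exact: ReM. Qed.
Lemma II_mul h k : II (fun a b => h a b * k a b) =
  (fun a b => RI h a b * II k a b + II h a b * RI k a b).
Proof. apply: funext => a; apply: funext => b; exact: ImM. Qed.
Lemma RI_add h k : RI (fun a b => h a b + k a b) = (fun a b => RI h a b + RI k a b).
Proof. apply: funext => a; apply: funext => b; exact: ReD. Qed.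
Lemma II_add h k : II (fun a b => h a b + k a b) = (fun a b => II h a b + II k a b).
Proof. apply: funext => a; apply: funext => b; exact: ImD. Qed.
Lemma RI_opp h : RI (fun a b => - h a b) = (fun a b => - RI h a b).
Proof. apply: funext => a; apply: funext => b; exact: ReN. Qed.
Lemma II_opp h : II (fun a b => - h a b) = (fun a b => - II h a b).
Proof. apply: funext => a; apply: funext => b; exact: ImN. Qed.
Lemma RI_cst (c : C) : RI (fun _ _ => c) = (fun _ _ => complex.Re c).
Proof. reflexivity. Qed.
Lemma II_cst (c : C) : II (fun _ _ => c) = (fun _ _ => complex.Im c).
Proof. reflexivity. Qed.

Lemma dC_add h k : dC h -> dC k -> dC (fun a b => h a b + k a b).
Proof.
move=> [h1 h2] [k1 k2]; split; [rewrite RI_add | rewrite II_add]; apply: dR_add.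
exact: h1. exact: k1. exact: h2. exact: k2.
Qed.
Lemma dC_opp h : dC h -> dC (fun a b => - h a b).
Proof.
move=> [h1 h2]; split; [rewrite RI_opp | rewrite II_opp]; apply: dR_opp.
exact: h1. exact: h2.
Qed.
Lemma dC_mul h k : dC h -> dC k -> dC (fun a b => h a b * k a b).
Proof.
move=> [h1 h2] [k1 k2]; split; [rewrite RI_mul | rewrite II_mul]; apply: dR_add.
- exact: dR_mul. - exact/dR_opp/dR_mul. - exact: dR_mul. - exact: dR_mul.
Qed.
Lemma dC_cst (c : C) : dC (fun _ _ => c).
Proof. split; exact: dR_cst. Qed.

Lemma goodC_add h k : goodC h -> goodC k -> goodC (fun a b => h a b + k a b).
Proof.
move=> [h1 h2] [k1 k2]; split; [rewrite RI_add | rewrite II_add]; apply: good_add.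
exact: h1. exact: k1. exact: h2. exact: k2.
Qed.
Lemma goodC_opp h : goodC h -> goodC (fun a b => - h a b).
Proof.
move=> [h1 h2]; split; [rewrite RI_opp | rewrite II_opp]; apply: good_opp.
exact: h1. exact: h2.
Qed.
Lemma goodC_mul h k : goodC h -> goodC k -> goodC (fun a b => h a b * k a b).
Proof.
move=> [h1 h2] [k1 k2]; split; [rewrite RI_mul | rewrite II_mul]; apply: good_add.
- exact: good_mul. - exact/good_opp/good_mul. - exact: good_mul. - exact: good_mul.
Qed.
Lemma goodC_cst (c : C) : goodC (fun _ _ => c).
Proof. split; exact: good_cst. Qed.

Lemma goodC_dC h : goodC h -> dC h.
Proof. by move=> [[? _ _] [? _ _]]; split. Qed.
Lemma goodC_dCp d h : goodC h -> dC (pC d h).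
Proof. by move=> [[_ h1 _] [_ h2 _]]; split; [exact: h1 | exact: h2]. Qed.


Lemma pC_add d h k : dC h -> dC k ->
  pC d (fun a b => h a b + k a b) = (fun a b => pC d h a b + pC d k a b).
Proof.
move=> [h1 h2] [k1 k2]; apply: funext => a; apply: funext => b.
apply: cplx_eq; rewrite /pC /=.
- by rewrite RI_add (pp_add d h1 k1).
- by rewrite II_add (pp_add d h2 k2).
Qed.

Lemma pC_opp d h : dC h -> pC d (fun a b => - h a b) = (fun a b => - pC d h a b).
Proof.
move=> [h1 h2]; apply: funext => a; apply: funext => b.
apply: cplx_eq; rewrite /pC /=.
- by rewrite RI_opp (pp_opp d h1).
- by rewrite II_opp (pp_opp d h2).
Qed.

Lemma pC_cst d (c : C) : pC d (fun _ _ => c) = (fun _ _ => 0).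
Proof.
apply: funext => a; apply: funext => b.
by apply: cplx_eq; rewrite /pC /= ?RI_cst ?II_cst pp_cst.
Qed.

Lemma alg_cmulR (A B C0 D A' B' C' D' : R) :
  A' * C0 + A * C' + - (B' * D + B * D') = A' * C0 - B' * D + (A * C' - B * D').
Proof. ring. Qed.
Lemma alg_cmulI (A B C0 D A' B' C' D' : R) :
  A' * D + A * D' + (B' * C0 + B * C') = A' * D + B' * C0 + (A * D' + B * C').
Proof. ring. Qed.

Lemma pC_mul d h k : dC h -> dC k ->
  pC d (fun a b => h a b * k a b) = (fun a b => pC d h a b * k a b + h a b * pC d k a b).
Proof.
move=> [h1 h2] [k1 k2]; apply: funext => a; apply: funext => b.
apply: cplx_eq; rewrite /pC.
- rewrite RI_mul (pp_add d (dR_mul h1 k1) (dR_opp (dR_mul h2 k2))).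
  rewrite (pp_opp d (dR_mul h2 k2)) (pp_mul d h1 k1) (pp_mul d h2 k2).
  rewrite ReD !ReM /=. exact: alg_cmulR.
- rewrite II_mul (pp_add d (dR_mul h1 k2) (dR_mul h2 k1)).
  rewrite (pp_mul d h1 k2) (pp_mul d h2 k1).
  rewrite ImD !ImM /=. exact: alg_cmulI.
Qed.

Lemma ReJ (x : C) : complex.Re (Num.conj x) = complex.Re x. Proof. by case: x. Qed.
Lemma ImJ (x : C) : complex.Im (Num.conj x) = - complex.Im x. Proof. by case: x. Qed.
Lemma RI_conj h : RI (fun a b => Num.conj (h a b)) = RI h.
Proof. apply: funext => a; apply: funext => b; exact: ReJ. Qed.
Lemma II_conj h : II (fun a b => Num.conj (h a b)) = (fun a b => - II h a b).
Proof. apply: funext => a; apply: funext => b; exact: ImJ. Qed.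
Lemma dC_conj h : dC h -> dC (fun a b => Num.conj (h a b)).
Proof. move=> [h1 h2]; split; [rewrite RI_conj; exact: h1 | rewrite II_conj; exact: dR_opp]. Qed.
Lemma pC_conj d h : dC h ->
  pC d (fun a b => Num.conj (h a b)) = (fun a b => Num.conj (pC d h a b)).
Proof.
move=> [h1 h2]; apply: funext => a; apply: funext => b.
apply: cplx_eq; rewrite /pC.
- by rewrite RI_conj ReJ.
- by rewrite II_conj (pp_opp d h2) ImJ.
Qed.

Lemma smoothC_good h : smoothC h -> goodC h.
Proof. move=> [s1 s2]; split; exact: smooth_good. Qed.
Lemma smoothC_pC d h : smoothC h -> smoothC (pC d h).
Proof. move=> [s1 s2]; split; [exact: (smoothR_pp d s1) | exact: (smoothR_pp d s2)]. Qed.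
End Cplx.


Section Sum.
Variable R : realType.
Local Notation C := R[i].
Variable I : Type.
Implicit Types hs : I -> R -> R -> C.

Lemma sum_nilF hs : (fun a b => \sum_(k <- [::]) hs k a b) = (fun _ _ => 0).
Proof. apply: funext => a; apply: funext => b; exact: big_nil. Qed.
Lemma sum_consF hs x r : (fun a b => \sum_(k <- x :: r) hs k a b) =
  (fun a b => hs x a b + \sum_(k <- r) hs k a b).
Proof. apply: funext => a; apply: funext => b; exact: big_cons. Qed.

Lemma dC_sum (r : seq I) hs : (forall k, dC (hs k)) -> dC (fun a b => \sum_(k <- r) hs k a b).
Proof.
move=> H; elim: r => [|x r IH]; first by rewrite sum_nilF; exact: dC_cst.
rewrite sum_consF; apply: dC_add; [exact: H | exact: IH].
Qed.
Lemma goodC_sum (r : seq I) hs : (forall k, goodC (hs k)) -> goodC (fun a b => \sum_(k <- r) hs k a b).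
Proof.
move=> H; elim: r => [|x r IH]; first by rewrite sum_nilF; exact: goodC_cst.
rewrite sum_consF; apply: goodC_add; [exact: H | exact: IH].
Qed.
Lemma pC_sum d (r : seq I) hs : (forall k, dC (hs k)) ->
  pC d (fun a b => \sum_(k <- r) hs k a b) = (fun a b => \sum_(k <- r) pC d (hs k) a b).
Proof.
move=> H; elim: r => [|x r IH].
  rewrite sum_nilF pC_cst; apply: funext => a; apply: funext => b; rewrite big_nil; reflexivity.
rewrite sum_consF (pC_add d (H x) (dC_sum r H)) IH.
apply: funext => a; apply: funext => b; rewrite big_cons; reflexivity.
Qed.
End Sum.

Section Mat.
Variable R : realType.
Local Notation C := R[i].
Variable n : nat.
Local Notation M := 'M[C]_n.
Implicit Types F G : R -> R -> M.
Implicit Types h k : R -> R -> C.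

Definition ent F (i j : 'I_n) : R -> R -> C := fun a b => F a b i j.
Definition pM (d : bool) F : R -> R -> M :=
  fun a b => \matrix_(i, j) pC d (ent F i j) a b.
Lemma pM_true F : paM F = pM true F. Proof. reflexivity. Qed.
Lemma pM_false F : pbM F = pM false F. Proof. reflexivity. Qed.

Definition dM F := forall i j, dC (ent F i j).
Definition goodM F := forall i j, goodC (ent F i j).

Lemma ent_pM d F i j : ent (pM d F) i j = pC d (ent F i j).
Proof. apply: funext => a; apply: funext => b; rewrite /ent mxE; reflexivity. Qed.

Lemma ent_add F G i j : ent (fun a b => F a b + G a b) i j = (fun a b => ent F i j a b + ent G i j a b).
Proof. apply: funext => a; apply: funext => b; rewrite /ent mxE; reflexivity. Qed.
Lemma ent_opp F i j : ent (fun a b => - F a b) i j = (fun a b => - ent F i j a b).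
Proof. apply: funext => a; apply: funext => b; rewrite /ent mxE; reflexivity. Qed.
Lemma ent_scal h F i j : ent (fun a b => h a b *: F a b) i j = (fun a b => h a b * ent F i j a b).
Proof. apply: funext => a; apply: funext => b; rewrite /ent mxE; reflexivity. Qed.
Lemma ent_mul F G i j : ent (fun a b => F a b *m G a b) i j =
  (fun a b => \sum_(k < n) ent F i k a b * ent G k j a b).
Proof. apply: funext => a; apply: funext => b; rewrite /ent mxE; reflexivity. Qed.
Lemma ent_cst (A : M) i j : ent (fun _ _ => A) i j = (fun _ _ => A i j).
Proof. reflexivity. Qed.
Lemma ent_hadj F i j : ent (fun a b => hadj (F a b)) i j = (fun a b => Num.conj (ent F j i a b)).
Proof. apply: funext => a; apply: funext => b; rewrite /ent /hadj !mxE; reflexivity. Qed.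


Lemma dM_add F G : dM F -> dM G -> dM (fun a b => F a b + G a b).
Proof. move=> HF HG i j; rewrite ent_add; apply: dC_add; [exact: HF | exact: HG]. Qed.
Lemma dM_opp F : dM F -> dM (fun a b => - F a b).
Proof. move=> HF i j; rewrite ent_opp; apply: dC_opp; exact: HF. Qed.
Lemma dM_scal h F : dC h -> dM F -> dM (fun a b => h a b *: F a b).
Proof. move=> Hh HF i j; rewrite ent_scal; apply: dC_mul; [exact: Hh | exact: HF]. Qed.
Lemma dM_mul F G : dM F -> dM G -> dM (fun a b => F a b *m G a b).
Proof.
move=> HF HG i j; rewrite ent_mul; apply: dC_sum => k; apply: dC_mul; [exact: HF | exact: HG].
Qed.
Lemma dM_cst (A : M) : dM (fun _ _ => A).
Proof. move=> i j; exact: dC_cst. Qed.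
Lemma dM_hadj F : dM F -> dM (fun a b => hadj (F a b)).
Proof. move=> HF i j; rewrite ent_hadj; apply: dC_conj; exact: HF. Qed.

Lemma goodM_add F G : goodM F -> goodM G -> goodM (fun a b => F a b + G a b).
Proof. move=> HF HG i j; rewrite ent_add; apply: goodC_add; [exact: HF | exact: HG]. Qed.
Lemma goodM_opp F : goodM F -> goodM (fun a b => - F a b).
Proof. move=> HF i j; rewrite ent_opp; apply: goodC_opp; exact: HF. Qed.
Lemma goodM_scal h F : goodC h -> goodM F -> goodM (fun a b => h a b *: F a b).
Proof. move=> Hh HF i j; rewrite ent_scal; apply: goodC_mul; [exact: Hh | exact: HF]. Qed.
Lemma goodM_mul F G : goodM F -> goodM G -> goodM (fun a b => F a b *m G a b).
Proof.
move=> HF HG i j; rewrite ent_mul; apply: goodC_sum => k; apply: goodC_mul; [exact: HF | exact: HG].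
Qed.
Lemma goodM_cst (A : M) : goodM (fun _ _ => A).
Proof. move=> i j; exact: goodC_cst. Qed.
Lemma goodM_dM F : goodM F -> dM F.
Proof. move=> HF i j; exact: goodC_dC. Qed.
Lemma goodM_dMp d F : goodM F -> dM (pM d F).
Proof. move=> HF i j; rewrite ent_pM; exact: goodC_dCp. Qed.

Lemma smoothM_good F : smoothM F -> goodM F.
Proof. move=> HF i j; exact: (smoothC_good (HF i j)). Qed.
Lemma smoothM_pM d F : smoothM F -> smoothM (pM d F).
Proof.
move=> HF i j.
have -> : (fun a b => pM d F a b i j) = pC d (ent F i j) := ent_pM d F i j.
exact: (smoothC_pC d (HF i j)).
Qed.

Lemma pM_add d F G : dM F -> dM G ->
  pM d (fun a b => F a b + G a b) = (fun a b => pM d F a b + pM d G a b).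
Proof.
move=> HF HG; apply: funext => a; apply: funext => b; apply/matrixP => i j.
rewrite /pM !mxE ent_add (pC_add d (HF i j) (HG i j)); reflexivity.
Qed.
Lemma pM_opp d F : dM F -> pM d (fun a b => - F a b) = (fun a b => - pM d F a b).
Proof.
move=> HF; apply: funext => a; apply: funext => b; apply/matrixP => i j.
rewrite /pM !mxE ent_opp (pC_opp d (HF i j)); reflexivity.
Qed.
Lemma pM_scal d h F : dC h -> dM F ->
  pM d (fun a b => h a b *: F a b) = (fun a b => pC d h a b *: F a b + h a b *: pM d F a b).
Proof.
move=> Hh HF; apply: funext => a; apply: funext => b; apply/matrixP => i j.
rewrite /pM !mxE ent_scal (pC_mul d Hh (HF i j)); reflexivity.
Qed.
Lemma pM_cst d (A : M) : pM d (fun _ _ => A) = (fun _ _ => 0).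
Proof.
apply: funext => a; apply: funext => b; apply/matrixP => i j.
rewrite /pM !mxE ent_cst pC_cst; reflexivity.
Qed.
Lemma pM_mul d F G : dM F -> dM G ->
  pM d (fun a b => F a b *m G a b) = (fun a b => pM d F a b *m G a b + F a b *m pM d G a b).
Proof.
move=> HF HG; apply: funext => a; apply: funext => b; apply/matrixP => i j.
rewrite /pM !mxE ent_mul.
rewrite (pC_sum d _ (fun l => dC_mul (HF i l) (HG l j))).
rewrite -big_split /=; apply: eq_bigr => l _.
rewrite (pC_mul d (HF i l) (HG l j)) ?mxE; reflexivity.
Qed.
Lemma pM_hadj d F : dM F -> pM d (fun a b => hadj (F a b)) = (fun a b => hadj (pM d F a b)).
Proof.
move=> HF; apply: funext => a; apply: funext => b; apply/matrixP => i j.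
rewrite /pM /hadj !mxE -/(hadj _) ent_hadj (pC_conj d (HF j i)); reflexivity.
Qed.
End Mat.


Section DD.
Variable R : realType.
Local Notation C := R[i].
Variable n : nat.
Local Notation M := 'M[C]_n.
Implicit Types F G : R -> R -> M.
Implicit Types h : R -> R -> C.

Lemma RI_pC d h : RI (pC d h) = pp d (RI h). Proof. reflexivity. Qed.
Lemma II_pC d h : II (pC d h) = pp d (II h). Proof. reflexivity. Qed.
Lemma Re_pC d h a b : complex.Re (pC d h a b) = pp d (RI h) a b. Proof. reflexivity. Qed.
Lemma Im_pC d h a b : complex.Im (pC d h a b) = pp d (II h) a b. Proof. reflexivity. Qed.

Lemma pM_ent d F a b i j : pM d F a b i j = pC d (ent F i j) a b.
Proof. rewrite /pM mxE; reflexivity. Qed.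

Lemma goodC_comm h : goodC h -> pC true (pC false h) = pC false (pC true h).
Proof.
move=> [[_ _ c1] [_ _ c2]]; apply: funext => a; apply: funext => b.
apply: cplx_eq.
- rewrite [LHS]Re_pC [RHS]Re_pC RI_pC RI_pC c1; reflexivity.
- rewrite [LHS]Im_pC [RHS]Im_pC II_pC II_pC c2; reflexivity.
Qed.

Lemma goodM_comm F : goodM F -> pM true (pM false F) = pM false (pM true F).
Proof.
move=> HF; apply: funext => a; apply: funext => b; apply/matrixP => i j.
rewrite [LHS]pM_ent [RHS]pM_ent !ent_pM (goodC_comm (HF i j)); reflexivity.
Qed.

Definition DD (e : C) F : R -> R -> M :=
  fun a b => 2^-1 *: (pM true F a b + e *: pM false F a b).
Definition DDc (e : C) h : R -> R -> C :=
  fun a b => 2^-1 * (pC true h a b + e * pC false h a b).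

Lemma D1_DD s F : D1 s F = DD (coef R s) F. Proof. reflexivity. Qed.
Lemma D2_DD s F : D2 s F = DD (- coef R s) F.
Proof. apply: funext => a; apply: funext => b; rewrite /D2 /DD scaleNr; reflexivity. Qed.
Lemma D1c_DD s h : D1c s h = DDc (coef R s) h. Proof. reflexivity. Qed.
Lemma D2c_DD s h : D2c s h = DDc (- coef R s) h.
Proof. apply: funext => a; apply: funext => b; rewrite /D2c /DDc mulNr; reflexivity. Qed.


Lemma alg_DDmul (e c : C) (A A' B B' F G : M) :
  c *: ((A *m G + F *m B) + e *: (A' *m G + F *m B')) =
  (c *: (A + e *: A')) *m G + F *m (c *: (B + e *: B')).
Proof.
rewrite -scalemxAl -scalemxAr -scalerDr; congr (_ *: _).
by rewrite mulmxDl mulmxDr -scalemxAl -scalemxAr scalerDr addrACA.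
Qed.
Lemma alg_DDadd (e c : C) (A A' B B' : M) :
  c *: ((A + B) + e *: (A' + B')) = c *: (A + e *: A') + c *: (B + e *: B').
Proof. apply/matrixP => i j; rewrite !mxE; ring. Qed.
Lemma alg_DDopp (e c : C) (A A' : M) :
  c *: (- A + e *: - A') = - (c *: (A + e *: A')).
Proof. apply/matrixP => i j; rewrite !mxE; ring. Qed.
Lemma alg_DDcst (e c : C) : c *: (0 + e *: 0) = 0 :> M.
Proof. by rewrite scaler0 addr0 scaler0. Qed.
Lemma alg_DDscal (e c hT hF h : C) (F AT AF : M) :
  c *: ((hT *: F + h *: AT) + e *: (hF *: F + h *: AF)) =
  (c * (hT + e * hF)) *: F + h *: (c *: (AT + e *: AF)).
Proof. apply/matrixP => i j; rewrite !mxE; ring. Qed.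
Lemma alg_DDcscal (e c k : C) (F AT AF : M) :
  c *: ((0 *: F + k *: AT) + e *: (0 *: F + k *: AF)) = k *: (c *: (AT + e *: AF)).
Proof. apply/matrixP => i j; rewrite !mxE; ring. Qed.
Lemma alg_pMDD (c e : C) (X P Y Q : M) :
  0 *: X + c *: (P + (0 *: Y + e *: Q)) = c *: (P + e *: Q).
Proof. by rewrite !scale0r !add0r. Qed.
Lemma alg_comm (c e1 e2 : C) (TT X FF : M) :
  c *: (c *: (TT + e2 *: X) + e1 *: (c *: (X + e2 *: FF))) =
  c *: (c *: (TT + e1 *: X) + e2 *: (c *: (X + e1 *: FF))).
Proof. apply/matrixP => i j; rewrite !mxE; ring. Qed.
Lemma alg_DDc (e c hT hF : C) : c * (0 + e * 0) = 0.
Proof. by rewrite mulr0 addr0 mulr0. Qed.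
End DD.


Section DD2.
Variable R : realType.
Local Notation C := R[i].
Variable n : nat.
Local Notation M := 'M[C]_n.
Implicit Types F G : R -> R -> M.
Implicit Types h : R -> R -> C.

Lemma DD_mul e F G : dM F -> dM G ->
  DD e (fun a b => F a b *m G a b) = (fun a b => DD e F a b *m G a b + F a b *m DD e G a b).
Proof.
move=> HF HG; apply: funext => a; apply: funext => b.
rewrite /DD (pM_mul true HF HG) (pM_mul false HF HG); exact: alg_DDmul.
Qed.
Lemma DD_add e F G : dM F -> dM G ->
  DD e (fun a b => F a b + G a b) = (fun a b => DD e F a b + DD e G a b).
Proof.
move=> HF HG; apply: funext => a; apply: funext => b.
rewrite /DD (pM_add true HF HG) (pM_add false HF HG); exact: alg_DDadd.
Qed.
Lemma DD_opp e F : dM F -> DD e (fun a b => - F a b) = (fun a b => - DD e F a b).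
Proof.
move=> HF; apply: funext => a; apply: funext => b.
rewrite /DD (pM_opp true HF) (pM_opp false HF); exact: alg_DDopp.
Qed.
Lemma DD_cst e (A : M) : DD e (fun _ _ => A) = (fun _ _ => 0).
Proof.
apply: funext => a; apply: funext => b.
rewrite /DD !pM_cst; exact: alg_DDcst.
Qed.
Lemma DD_scal e h F : dC h -> dM F ->
  DD e (fun a b => h a b *: F a b) = (fun a b => DDc e h a b *: F a b + h a b *: DD e F a b).
Proof.
move=> Hh HF; apply: funext => a; apply: funext => b.
rewrite /DD /DDc (pM_scal true Hh HF) (pM_scal false Hh HF); exact: alg_DDscal.
Qed.
Lemma DD_cscal e (k : C) F : dM F ->
  DD e (fun a b => k *: F a b) = (fun a b => k *: DD e F a b).
Proof.
move=> HF; apply: funext => a; apply: funext => b.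
rewrite /DD (pM_scal true (dC_cst k) HF) (pM_scal false (dC_cst k) HF) !pC_cst.
exact: alg_DDcscal.
Qed.
Lemma DDc_cst e (k : C) : DDc e (fun _ _ => k) = (fun _ _ => 0).
Proof.
apply: funext => a; apply: funext => b; rewrite /DDc !pC_cst; exact: alg_DDc.
Qed.

Lemma dM_DD e F : goodM F -> dM (DD e F).
Proof.
move=> HF; rewrite /DD; apply: dM_scal; first exact: dC_cst.
apply: dM_add; first exact: goodM_dMp.
apply: dM_scal; first exact: dC_cst.
exact: goodM_dMp.
Qed.
Lemma goodM_DD e F : goodM (pM true F) -> goodM (pM false F) -> goodM (DD e F).
Proof.
move=> H1 H2; rewrite /DD; apply: goodM_scal; first exact: goodC_cst.
apply: goodM_add; first exact: H1.
apply: goodM_scal; first exact: goodC_cst.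
exact: H2.
Qed.

Lemma pM_DD d e F : goodM F ->
  pM d (DD e F) = (fun a b => 2^-1 *: (pM d (pM true F) a b + e *: pM d (pM false F) a b)).
Proof.
move=> HF; have d1 := goodM_dMp true HF; have d2 := goodM_dMp false HF.
have d3 : dM (fun a b => e *: pM false F a b) by apply: dM_scal; [exact: dC_cst | exact: d2].
have d4 : dM (fun a b => pM true F a b + e *: pM false F a b) by apply: dM_add; [exact: d1 | exact: d3].
rewrite /DD (pM_scal d (dC_cst _) d4) (pM_add d d1 d3) (pM_scal d (dC_cst _) d2) !pC_cst.
apply: funext => a; apply: funext => b; exact: alg_pMDD.
Qed.

Lemma DD_comm e1 e2 F : goodM F -> DD e1 (DD e2 F) = DD e2 (DD e1 F).
Proof.
move=> HF; rewrite /DD.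
rewrite (pM_DD true e2 HF) (pM_DD false e2 HF) (pM_DD true e1 HF) (pM_DD false e1 HF).
rewrite (goodM_comm HF).
apply: funext => a; apply: funext => b; exact: alg_comm.
Qed.

End DD2.


Section Alg.
Variable R : realType.
Local Notation C := R[i].
Variable n : nat.
Local Notation M := 'M[C]_n.
Implicit Types A B D : M.

Lemma commDl A B D : comm (A + B) D = comm A D + comm B D.
Proof. by rewrite /comm mulmxDl mulmxDr opprD addrACA. Qed.
Lemma commDr A B D : comm D (A + B) = comm D A + comm D B.
Proof. by rewrite /comm mulmxDl mulmxDr opprD addrACA. Qed.
Lemma commZl (k : C) A B : comm (k *: A) B = k *: comm A B.
Proof. by rewrite /comm -scalemxAl -scalemxAr scalerBr. Qed.
Lemma commZr (k : C) A B : comm A (k *: B) = k *: comm A B.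
Proof. by rewrite /comm -scalemxAl -scalemxAr scalerBr. Qed.
Lemma commNl A B : comm (- A) B = - comm A B.
Proof. by rewrite /comm mulNmx mulmxN opprB opprK addrC. Qed.
Lemma commNr A B : comm A (- B) = - comm A B.
Proof. by rewrite /comm mulNmx mulmxN opprB opprK addrC. Qed.
Lemma comm0l A : comm 0 A = 0.
Proof. by rewrite /comm mul0mx mulmx0 subrr. Qed.
Lemma comm0r A : comm A 0 = 0.
Proof. by rewrite /comm mul0mx mulmx0 subrr. Qed.
Lemma comm_refl A : comm A A = 0.
Proof. by rewrite /comm subrr. Qed.
Lemma commC A B : comm B A = - comm A B.
Proof. by rewrite /comm opprB. Qed.
Lemma comm_tr A B : \tr (comm A B) = 0.
Proof. by rewrite /comm raddfB /= mxtrace_mulC subrr. Qed.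

Lemma jacobi A B D : comm A (comm B D) = comm (comm A B) D + comm B (comm A D).
Proof.
rewrite /comm !mulmxBl !mulmxBr !mulmxA.
move: (A *m B *m D) (A *m D *m B) (B *m D *m A) (D *m B *m A)
      (B *m A *m D) (D *m A *m B) => p1 p2 p3 p4 p5 p6.
apply/matrixP => i j; rewrite !mxE; ring.
Qed.

Lemma hadj_mul A B : hadj (A *m B) = hadj B *m hadj A.
Proof. by rewrite /hadj map_mxM trmx_mul. Qed.
Lemma hadjK A : hadj (hadj A) = A.
Proof. by apply/matrixP => i j; rewrite /hadj !mxE conjCK. Qed.
Lemma hadjD A B : hadj (A + B) = hadj A + hadj B.
Proof. by apply/matrixP => i j; rewrite /hadj !mxE rmorphD. Qed.
Lemma hadjN A : hadj (- A) = - hadj A.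
Proof. by apply/matrixP => i j; rewrite /hadj !mxE rmorphN. Qed.
Lemma hadjZ (k : C) A : hadj (k *: A) = Num.conj k *: hadj A.
Proof. by apply/matrixP => i j; rewrite /hadj !mxE rmorphM. Qed.


Implicit Types F G : R -> R -> M.
Lemma dM_comm F G : dM F -> dM G -> dM (fun a b => comm (F a b) (G a b)).
Proof.
move=> HF HG; rewrite /comm; apply: dM_add; first exact: dM_mul.
apply: dM_opp; exact: dM_mul.
Qed.
Lemma goodM_commf F G : goodM F -> goodM G -> goodM (fun a b => comm (F a b) (G a b)).
Proof.
move=> HF HG; rewrite /comm; apply: goodM_add; first exact: goodM_mul.
apply: goodM_opp; exact: goodM_mul.
Qed.
Lemma alg_commF (A A' B B' : M) :
  A' *m B + A *m B' + - (B' *m A + B *m A') = comm A' B + comm A B'.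
Proof.
rewrite /comm; move: (A' *m B) (A *m B') (B' *m A) (B *m A') => p1 p2 p3 p4.
apply/matrixP => i j; rewrite !mxE; ring.
Qed.
Lemma DD_commF e F G : dM F -> dM G ->
  DD e (fun a b => comm (F a b) (G a b)) =
  (fun a b => comm (DD e F a b) (G a b) + comm (F a b) (DD e G a b)).
Proof.
move=> HF HG; rewrite /comm.
rewrite (DD_add e (dM_mul HF HG) (dM_opp (dM_mul HG HF))).
rewrite (DD_opp e (dM_mul HG HF)) (DD_mul e HF HG) (DD_mul e HG HF).
apply: funext => a; apply: funext => b; exact: alg_commF.
Qed.
End Alg.


Section Core.
Variable R : realType.
Local Notation C := R[i].
Variable n : nat.
Local Notation M := 'M[C]_n.
Implicit Types F G th Phi : R -> R -> M.
Implicit Types f g : R -> R -> C.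

Fact DDl_key : unit. Proof. exact: tt. Qed.
Definition DDl : C -> (R -> R -> M) -> R -> R -> M := locked_with DDl_key (@DD R n).
Lemma DDlE : DDl = @DD R n. Proof. exact: locked_withE. Qed.
Fact DDcl_key : unit. Proof. exact: tt. Qed.
Definition DDcl : C -> (R -> R -> C) -> R -> R -> C := locked_with DDcl_key (@DDc R).
Lemma DDclE : DDcl = @DDc R. Proof. exact: locked_withE. Qed.

Lemma DDl_mul e F G : dM F -> dM G ->
  DDl e (fun a b => F a b *m G a b) = (fun a b => DDl e F a b *m G a b + F a b *m DDl e G a b).
Proof. rewrite DDlE; exact: DD_mul. Qed.
Lemma DDl_add e F G : dM F -> dM G ->
  DDl e (fun a b => F a b + G a b) = (fun a b => DDl e F a b + DDl e G a b).
Proof. rewrite DDlE; exact: DD_add. Qed.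
Lemma DDl_opp e F : dM F -> DDl e (fun a b => - F a b) = (fun a b => - DDl e F a b).
Proof. rewrite DDlE; exact: DD_opp. Qed.
Lemma DDl_cst e (A : M) : DDl e (fun _ _ => A) = (fun _ _ => 0).
Proof. rewrite DDlE; exact: DD_cst. Qed.
Lemma DDl_scal e (h : R -> R -> C) F : dC h -> dM F ->
  DDl e (fun a b => h a b *: F a b) = (fun a b => DDcl e h a b *: F a b + h a b *: DDl e F a b).
Proof. rewrite DDlE DDclE; exact: DD_scal. Qed.
Lemma DDl_cscal e (k : C) F : dM F ->
  DDl e (fun a b => k *: F a b) = (fun a b => k *: DDl e F a b).
Proof. rewrite DDlE; exact: DD_cscal. Qed.
Lemma DDl_commF e F G : dM F -> dM G ->
  DDl e (fun a b => comm (F a b) (G a b)) =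
  (fun a b => comm (DDl e F a b) (G a b) + comm (F a b) (DDl e G a b)).
Proof. rewrite DDlE; exact: DD_commF. Qed.
Lemma dM_DDl e F : goodM F -> dM (DDl e F).
Proof. rewrite DDlE; exact: dM_DD. Qed.
Lemma goodM_DDl e F : goodM (pM true F) -> goodM (pM false F) -> goodM (DDl e F).
Proof. rewrite DDlE; exact: goodM_DD. Qed.
Lemma DDl_comm e1 e2 F : goodM F -> DDl e1 (DDl e2 F) = DDl e2 (DDl e1 F).
Proof. rewrite DDlE; exact: DD_comm. Qed.

Fact Uf_key : unit. Proof. exact: tt. Qed.
Definition Uf : C -> C -> (R -> R -> M) -> R -> R -> M :=
  locked_with Uf_key (fun (c e : C) th a b => c *: comm (DDl e th a b) (th a b)).
Definition Qf (e1 e2 : C) f g th : R -> R -> M :=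
  fun a b => f a b *: DDl e1 th a b + g a b *: DDl e2 th a b.
Definition Xf f g (U1 U2 : R -> R -> M) : R -> R -> M :=
  fun a b => f a b *: U1 a b + g a b *: U2 a b.
Definition Pf (c e : C) th (Q : R -> R -> M) : R -> R -> M :=
  fun a b => c *: (comm (DDl e Q a b) (th a b) + comm (DDl e th a b) (Q a b)).

Lemma UfE c e th : Uf c e th = (fun a b => c *: comm (DDl e th a b) (th a b)).
Proof. rewrite /Uf locked_withE; reflexivity. Qed.
Lemma UfE' c e th a b : Uf c e th a b = c *: comm (DDl e th a b) (th a b).
Proof. by rewrite UfE. Qed.

Lemma goodM_Uf c e th : goodM th -> goodM (pM true th) -> goodM (pM false th) ->
  goodM (Uf c e th).
Proof.
move=> g0 g1 g2; rewrite UfE; apply: goodM_scal; first exact: goodC_cst.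
apply: goodM_commf; [exact: goodM_DDl | exact: g0].
Qed.

Lemma alg_zc (Z1 Z2 U1 U2 P : M) : P \in unitmx ->
  Z1 *m P + U1 *m (U2 *m P) = Z2 *m P + U2 *m (U1 *m P) -> Z1 - Z2 + comm U1 U2 = 0.
Proof.
move=> uP; rewrite !mulmxA -!mulmxDl => /(congr1 (mulmx^~ (invmx P))).
rewrite -!mulmxA mulmxV // !mulmx1 => E.
have : (Z1 + U1 *m U2) - (Z2 + U2 *m U1) = 0 by rewrite E subrr.
by rewrite /comm opprD addrACA.
Qed.

Lemma core_zc (e1 e2 c1 c2 : C) th Phi :
  goodM th -> goodM (pM true th) -> goodM (pM false th) -> goodM Phi ->
  (forall a b, Phi a b \in unitmx) ->
  (forall a b, DDl e1 Phi a b = Uf c1 e1 th a b *m Phi a b) ->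
  (forall a b, DDl e2 Phi a b = Uf c2 e2 th a b *m Phi a b) ->
  forall a b, DDl e2 (Uf c1 e1 th) a b - DDl e1 (Uf c2 e2 th) a b
              + comm (Uf c1 e1 th a b) (Uf c2 e2 th a b) = 0.
Proof.
move=> g0 g1 g2 gP uP h1 h2 a b.
have dU1 := goodM_dM (goodM_Uf c1 e1 g0 g1 g2).
have dU2 := goodM_dM (goodM_Uf c2 e2 g0 g1 g2).
have dP := goodM_dM gP.
have E := DDl_comm e2 e1 gP.
have F1 : DDl e1 Phi = (fun a b => Uf c1 e1 th a b *m Phi a b).
  by apply: funext => x; apply: funext => y; exact: h1.
have F2 : DDl e2 Phi = (fun a b => Uf c2 e2 th a b *m Phi a b).
  by apply: funext => x; apply: funext => y; exact: h2.
move: E; rewrite {1}F1 {1}F2 (DDl_mul e2 dU1 dP) (DDl_mul e1 dU2 dP).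
move=> /(congr1 (fun F => F a b)) /=; rewrite h1 h2.
exact: alg_zc.
Qed.


Lemma zc_solve1 (Z1 Z2 W : M) : Z1 - Z2 + W = 0 -> Z2 = Z1 + W.
Proof.
move=> H; have E : Z2 = Z1 + W - (Z1 - Z2 + W) by apply/matrixP=> i j; rewrite !mxE; ring.
by rewrite E H subr0.
Qed.
Lemma zc_solve2 (Z1 Z2 W : M) : Z1 - Z2 + W = 0 -> Z1 = Z2 - W.
Proof.
move=> H; have E : Z1 = Z2 - W + (Z1 - Z2 + W) by apply/matrixP=> i j; rewrite !mxE; ring.
by rewrite E H addr0.
Qed.

Lemma QfE e1 e2 f g th : Qf e1 e2 f g th = (fun a b => f a b *: DDl e1 th a b + g a b *: DDl e2 th a b).
Proof. reflexivity. Qed.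
Lemma QfE' e1 e2 f g th a b : Qf e1 e2 f g th a b = f a b *: DDl e1 th a b + g a b *: DDl e2 th a b.
Proof. reflexivity. Qed.
Lemma XfE f g U1 U2 : Xf f g U1 U2 = (fun a b => f a b *: U1 a b + g a b *: U2 a b).
Proof. reflexivity. Qed.
Lemma XfE' f g U1 U2 a b : Xf f g U1 U2 a b = f a b *: U1 a b + g a b *: U2 a b.
Proof. reflexivity. Qed.
Lemma PfE c e th Q a b : Pf c e th Q a b = c *: (comm (DDl e Q a b) (th a b) + comm (DDl e th a b) (Q a b)).
Proof. reflexivity. Qed.


Lemma alg_K1 (c1 c2 f0 g0 f1 : C) (T T1 T2 T11 T21 : M) :
  c1 *: (comm (f1 *: T1 + f0 *: T11 + (0 *: T2 + g0 *: T21)) T + comm T1 (f0 *: T1 + g0 *: T2))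
  = f1 *: (c1 *: comm T1 T) + f0 *: (c1 *: (comm T11 T + comm T1 T1)) +
    (0 *: (c2 *: comm T2 T) + g0 *: (c1 *: (comm T21 T + comm T1 T2) +
       comm (c1 *: comm T1 T) (c2 *: comm T2 T))) +
    comm (f0 *: (c1 *: comm T1 T) + g0 *: (c2 *: comm T2 T)) (c1 *: comm T1 T).
Proof.
rewrite !commDl !commDr !commZl !commZr !comm_refl (commC (comm T1 T) (comm T2 T)).
move: (comm T1 T) (comm T11 T) (comm T21 T) (comm T1 T2) (comm (comm T1 T) (comm T2 T))
  (comm T2 T) => K1 K11 K21 K12 W K2.
apply/matrixP => i j; rewrite !mxE; ring.
Qed.

Lemma core_K1 (e1 e2 c1 c2 : C) th f g :
  goodM th -> goodM (pM true th) -> goodM (pM false th) -> goodC f -> goodC g ->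
  (forall a b, DDcl e1 g a b = 0) ->
  (forall a b, DDl e2 (Uf c1 e1 th) a b - DDl e1 (Uf c2 e2 th) a b
              + comm (Uf c1 e1 th a b) (Uf c2 e2 th a b) = 0) ->
  forall a b, Pf c1 e1 th (Qf e1 e2 f g th) a b =
    DDl e1 (Xf f g (Uf c1 e1 th) (Uf c2 e2 th)) a b +
    comm (Xf f g (Uf c1 e1 th) (Uf c2 e2 th) a b) (Uf c1 e1 th a b).
Proof.
move=> g0 g1 g2 gf gg hg zc a b.
have d0 := goodM_dM g0.
have dT1 := dM_DDl e1 g0; have dT2 := dM_DDl e2 g0.
have df := goodC_dC gf; have dg := goodC_dC gg.
have dU1 := goodM_dM (goodM_Uf c1 e1 g0 g1 g2).
have dU2 := goodM_dM (goodM_Uf c2 e2 g0 g1 g2).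
rewrite PfE XfE ?XfE' QfE ?QfE'.
rewrite [in RHS](DDl_add e1 (dM_scal df dU1) (dM_scal dg dU2)).
rewrite [in RHS](DDl_scal e1 df dU1) [in RHS](DDl_scal e1 dg dU2).
rewrite (DDl_add e1 (dM_scal df dT1) (dM_scal dg dT2)).
rewrite (DDl_scal e1 df dT1) (DDl_scal e1 dg dT2).
rewrite !hg.
rewrite (zc_solve1 (zc a b)) (DDl_comm e1 e2 g0).
rewrite !UfE (DDl_cscal e1 c1 (dM_comm dT1 d0)) (DDl_cscal e2 c1 (dM_comm dT1 d0)).
rewrite (DDl_commF e1 dT1 d0) (DDl_commF e2 dT1 d0).
exact: alg_K1.
Qed.

Lemma alg_K2 (c1 c2 f0 g0 g2 : C) (T T1 T2 T21 T22 : M) :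
  c2 *: (comm (0 *: T1 + f0 *: T21 + (g2 *: T2 + g0 *: T22)) T + comm T2 (f0 *: T1 + g0 *: T2)) =
  0 *: (c1 *: comm T1 T) +
  f0 *: (c2 *: (comm T21 T + comm T2 T1) - comm (c1 *: comm T1 T) (c2 *: comm T2 T)) +
  (g2 *: (c2 *: comm T2 T) + g0 *: (c2 *: (comm T22 T + comm T2 T2))) +
  comm (f0 *: (c1 *: comm T1 T) + g0 *: (c2 *: comm T2 T)) (c2 *: comm T2 T).
Proof.
rewrite !commDl !commDr !commZl !commZr !comm_refl.
move: (comm T1 T) (comm T21 T) (comm T22 T) (comm T2 T1) (comm (comm T1 T) (comm T2 T))
  (comm T2 T) => K1 K21 K22 K12 W K2.
apply/matrixP => i j; rewrite !mxE; ring.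
Qed.

Lemma core_K2 (e1 e2 c1 c2 : C) th f g :
  goodM th -> goodM (pM true th) -> goodM (pM false th) -> goodC f -> goodC g ->
  (forall a b, DDcl e2 f a b = 0) ->
  (forall a b, DDl e2 (Uf c1 e1 th) a b - DDl e1 (Uf c2 e2 th) a b
              + comm (Uf c1 e1 th a b) (Uf c2 e2 th a b) = 0) ->
  forall a b, Pf c2 e2 th (Qf e1 e2 f g th) a b =
    DDl e2 (Xf f g (Uf c1 e1 th) (Uf c2 e2 th)) a b +
    comm (Xf f g (Uf c1 e1 th) (Uf c2 e2 th) a b) (Uf c2 e2 th a b).
Proof.
move=> g0 g1 g2 gf gg hf zc a b.
have d0 := goodM_dM g0.
have dT1 := dM_DDl e1 g0; have dT2 := dM_DDl e2 g0.
have df := goodC_dC gf; have dg := goodC_dC gg.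
have dU1 := goodM_dM (goodM_Uf c1 e1 g0 g1 g2).
have dU2 := goodM_dM (goodM_Uf c2 e2 g0 g1 g2).
rewrite PfE XfE ?XfE' QfE ?QfE'.
rewrite [in RHS](DDl_add e2 (dM_scal df dU1) (dM_scal dg dU2)).
rewrite [in RHS](DDl_scal e2 df dU1) [in RHS](DDl_scal e2 dg dU2).
rewrite (DDl_add e2 (dM_scal df dT1) (dM_scal dg dT2)).
rewrite (DDl_scal e2 df dT1) (DDl_scal e2 dg dT2).
rewrite !hf (zc_solve2 (zc a b)).
rewrite !UfE (DDl_cscal e1 c2 (dM_comm dT2 d0)) (DDl_cscal e2 c2 (dM_comm dT2 d0)).
rewrite (DDl_commF e1 dT2 d0) (DDl_commF e2 dT2 d0) (DDl_comm e1 e2 g0).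
exact: alg_K2.
Qed.
End Core.


Section Core2.
Variable R : realType.
Local Notation C := R[i].
Variable n : nat.
Local Notation M := 'M[C]_n.
Implicit Types F G X U Phi : R -> R -> M.

Lemma alg_dh (DH H U P : M) : P \in unitmx -> 0 = DH *m P + H *m (U *m P) -> DH = - (H *m U).
Proof.
move=> uP; rewrite mulmxA -mulmxDl => /(congr1 (mulmx^~ (invmx P))).
rewrite mul0mx -mulmxA mulmxV // mulmx1 => /esym /eqP; rewrite addr_eq0 => /eqP //.
Qed.

Lemma core_dhadj e Phi U : goodM Phi ->
  (forall a b, hadj (Phi a b) *m Phi a b = 1%:M) -> (forall a b, Phi a b \in unitmx) ->
  (forall a b, DDl e Phi a b = U a b *m Phi a b) ->
  forall a b, DDl e (fun a b => hadj (Phi a b)) a b = - (hadj (Phi a b) *m U a b).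
Proof.
move=> gP hu uP hP a b.
have dP := goodM_dM gP; have dH := dM_hadj dP.
have E : (fun a b => hadj (Phi a b) *m Phi a b) = (fun _ _ => 1%:M).
  by apply: funext => x; apply: funext => y; exact: hu.
have := DDl_mul e dH dP; rewrite E DDl_cst => /(congr1 (fun F => F a b)) /=.
rewrite hP; exact: alg_dh.
Qed.

Lemma alg_T (DX X U H P : M) :
  (- (H *m U) *m X + H *m DX) *m P + H *m X *m (U *m P) = H *m (DX + comm X U) *m P.
Proof.
rewrite /comm !(mulmxDl, mulmxDr, mulmxBl, mulmxBr, mulNmx, mulmxN, mulmxA).
move: (H *m U *m X *m P) (H *m DX *m P) (H *m X *m U *m P) => p1 p2 p3.
apply/matrixP => i j; rewrite !mxE; ring.
Qed.

Lemma core_T e X U Phi : dM X -> dM Phi ->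
  (forall a b, DDl e Phi a b = U a b *m Phi a b) ->
  (forall a b, DDl e (fun a b => hadj (Phi a b)) a b = - (hadj (Phi a b) *m U a b)) ->
  forall a b, DDl e (fun a b => hadj (Phi a b) *m X a b *m Phi a b) a b =
    hadj (Phi a b) *m (DDl e X a b + comm (X a b) (U a b)) *m Phi a b.
Proof.
move=> dX dP hP hH a b; have dH := dM_hadj dP.
rewrite (DDl_mul e (dM_mul dH dX) dP) (DDl_mul e dH dX) /= hP hH.
exact: alg_T.
Qed.

Lemma alg_S (DX X U P : M) : DX *m P + X *m (U *m P) = U *m (X *m P) + (DX + comm X U) *m P.
Proof.
rewrite /comm !(mulmxDl, mulmxDr, mulmxBl, mulmxBr, mulNmx, mulmxN, mulmxA).
move: (DX *m P) (X *m U *m P) (U *m X *m P) => p1 p2 p3.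
apply/matrixP => i j; rewrite !mxE; ring.
Qed.

Lemma core_S e X U Phi : dM X -> dM Phi ->
  (forall a b, DDl e Phi a b = U a b *m Phi a b) ->
  forall a b, DDl e (fun a b => X a b *m Phi a b) a b =
    U a b *m (X a b *m Phi a b) + (DDl e X a b + comm (X a b) (U a b)) *m Phi a b.
Proof.
move=> dX dP hP a b.
rewrite (DDl_mul e dX dP) /= hP; exact: alg_S.
Qed.

Lemma alg_S1 (Y P Q X U1 U2 Z2 : M) :
  (Y + (comm Q U1 + comm X (Z2 - comm U1 U2))) - (Y + (comm P U2 + comm X Z2))
  + comm (P + comm X U1) U2 + comm U1 (Q + comm X U2) = 0.
Proof.
rewrite commDr commNr jacobi commDl commDr (commC U1 Q).
move: (comm Q U1) (comm X Z2) (comm (comm X U1) U2) (comm U1 (comm X U2)) (comm P U2) Y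
  => k1 k2 k3 k4 k5 y.
apply/matrixP => i j; rewrite !mxE; ring.
Qed.

Lemma core_S1 e1 e2 X U1 U2 : goodM X -> dM U1 -> dM U2 ->
  (forall a b, DDl e2 U1 a b - DDl e1 U2 a b + comm (U1 a b) (U2 a b) = 0) ->
  forall a b,
    DDl e2 (fun a b => DDl e1 X a b + comm (X a b) (U1 a b)) a b
    - DDl e1 (fun a b => DDl e2 X a b + comm (X a b) (U2 a b)) a b
    + comm (DDl e1 X a b + comm (X a b) (U1 a b)) (U2 a b)
    + comm (U1 a b) (DDl e2 X a b + comm (X a b) (U2 a b)) = 0.
Proof.
move=> gX dU1 dU2 zc a b; have dX := goodM_dM gX.
rewrite (DDl_add e2 (dM_DDl e1 gX) (dM_comm dX dU1)).
rewrite (DDl_add e1 (dM_DDl e2 gX) (dM_comm dX dU2)).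
rewrite (DDl_commF e2 dX dU1) (DDl_commF e1 dX dU2) /=.
rewrite (DDl_comm e2 e1 gX) (zc_solve2 (zc a b)).
exact: alg_S1.
Qed.

End Core2.


Section Bridge.
Variable R : realType.
Local Notation C := R[i].
Variable n : nat.
Local Notation M := 'M[C]_n.
Implicit Types F G X U Phi th : R -> R -> M.
Implicit Types f g : R -> R -> C.

Lemma D1_DDl s : @D1 R s n n = DDl (coef R s).
Proof. apply: funext => F; rewrite DDlE; exact: D1_DD. Qed.
Lemma D2_DDl s : @D2 R s n n = DDl (- coef R s).
Proof. apply: funext => F; rewrite DDlE; exact: D2_DD. Qed.
Lemma D1c_DDcl s : @D1c R s = DDcl (coef R s).
Proof. apply: funext => h; rewrite DDclE; exact: D1c_DD. Qed.
Lemma D2c_DDcl s : @D2c R s = DDcl (- coef R s).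
Proof. apply: funext => h; rewrite DDclE; exact: D2c_DD. Qed.

Lemma u1_Uf s lam th : u1 s lam th = Uf (-2 / (1 + lam)) (coef R s) th.
Proof. rewrite UfE /u1 D1_DDl; reflexivity. Qed.
Lemma u2_Uf s lam th : u2 s lam th = Uf (-2 / (1 - lam)) (- coef R s) th.
Proof. rewrite UfE /u2 D2_DDl; reflexivity. Qed.
Lemma charQ_Qf s f g th : charQ s f g th = Qf (coef R s) (- coef R s) f g th.
Proof. rewrite QfE /charQ D1_DDl D2_DDl; reflexivity. Qed.
Lemma fugu_Xf s lam f g th : fu_gu s lam f g th = Xf f g (u1 s lam th) (u2 s lam th).
Proof. rewrite XfE; reflexivity. Qed.
Lemma prw1_Pf s lam f g th :
  prwC_u1 s lam f g th = Pf (-2 / (1 + lam)) (coef R s) th (charQ s f g th).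
Proof.
apply: funext => a; apply: funext => b; rewrite PfE /prwC_u1 D1_DDl; reflexivity.
Qed.
Lemma prw2_Pf s lam f g th :
  prwC_u2 s lam f g th = Pf (-2 / (1 - lam)) (- coef R s) th (charQ s f g th).
Proof.
apply: funext => a; apply: funext => b; rewrite PfE /prwC_u2 D2_DDl; reflexivity.
Qed.

Lemma inv_hadj (P : M) : hadj P *m P = 1%:M -> invmx P = hadj P.
Proof.
move=> hu; have [_ uP] := mulmx1_unit hu.
by rewrite -[RHS]mulmx1 -(mulmxV uP) mulmxA hu mul1mx.
Qed.

Lemma su_conj (P X : M) : hadj P *m P = 1%:M -> X \in su n -> invmx P *m (X *m P) \in su n.
Proof.
move=> hu /andP[/eqP hX /eqP tX]; have [_ uP] := mulmx1_unit hu.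
rewrite (inv_hadj hu); apply/andP; split; apply/eqP.
- by rewrite !hadj_mul hadjK hX mulmxN mulNmx mulmxA.
- by rewrite mxtrace_mulC -mulmxA -(inv_hadj hu) (mulmxV uP) mulmx1 tX.
Qed.

Lemma su_comb (f0 g0 : C) (U1 U2 : M) :
  hadj (f0 *: U1 + g0 *: U2) = - (f0 *: U1 + g0 *: U2) ->
  \tr U1 = 0 -> \tr U2 = 0 -> f0 *: U1 + g0 *: U2 \in su n.
Proof.
move=> h t1 t2; apply/andP; split; apply/eqP; first exact: h.
by rewrite mxtraceD !mxtraceZ t1 t2 !mulr0 addr0.
Qed.

Lemma tr_Uf c e th a b : \tr (Uf c e th a b) = 0.
Proof. by rewrite UfE' mxtraceZ comm_tr mulr0. Qed.

End Bridge.


Lemma su_fugu (R : realType) (N : nat) (s : setting) (theta : R -> R -> 'M[R[i]]_N) (lam : R[i])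
  (f g : R -> R -> R[i]) : lsp_reality s lam theta -> fg_reality s f g ->
  forall a b, fu_gu s lam f g theta a b \in su N.
Proof.
move=> hreal hfg a b; rewrite /fu_gu u1_Uf u2_Uf.
apply: su_comb; [| exact: tr_Uf | exact: tr_Uf].
rewrite hadjD !hadjZ.
destruct s.
+ have hr : forall x y, u1 Minkowski lam theta x y \in su N /\ u2 Minkowski lam theta x y \in su N := hreal.
  rewrite u1_Uf u2_Uf in hr.
  have [s1 s2] := hr a b; move: s1 s2 => /andP[/eqP h1 _] /andP[/eqP h2 _].
  have [r1 r2] : f a b \is Num.real /\ g a b \is Num.real := hfg a b.
  by rewrite h1 h2 (conj_Creal r1) (conj_Creal r2) !scalerN [RHS]opprD.
+ have hr : forall x y, hadj (u1 Euclidean lam theta x y) = - u2 Euclidean lam theta x y := hreal.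
  rewrite u1_Uf u2_Uf in hr.
  have h1 := hr a b.
  have h2 : hadj (Uf (-2 / (1 - lam)) (- coef R Euclidean) theta a b) =
     - Uf (-2 / (1 + lam)) (coef R Euclidean) theta a b.
    by rewrite -[X in _ = - X]hadjK h1 hadjN [RHS]opprK.
  have hg : g a b = Num.conj (f a b) := hfg a b.
  by rewrite h1 h2 hg conjCK !scalerN [RHS]opprD addrC.
Qed.

Unset Implicit Arguments.
Set Strict Implicit.

Theorem proposition4 (R : realType) (N : nat) (s : setting)
  (theta : R -> R -> 'M[R[i]]_N) (lam : R[i])
  (Phi : R -> R -> 'M[R[i]]_N) (f g : R -> R -> R[i]) :
  (* theta : smooth su(N)-valued, P = E - i theta rank-one Hermitian projector *)
  smoothM theta ->
  (forall a b, theta a b \in su N) ->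
  (forall a b, rank_one_hermitian_projector (projP (theta a b))) ->
  (* Euler-Lagrange equations [theta_12, theta] = 0 *)
  (forall a b, comm (D2 s (D1 s theta) a b) (theta a b) = 0) ->
  (* spectral parameter and reality of the LSP in the chosen setting *)
  lam != 1 -> lam != -1 ->
  lsp_reality s lam theta ->
  (* Phi in SU(N) solves the LSP  D_alpha Phi = u^alpha Phi *)
  smoothM Phi ->
  (forall a b, Phi a b \in SU N) ->
  (forall a b, D1 s Phi a b = u1 s lam theta a b *m Phi a b) ->
  (forall a b, D2 s Phi a b = u2 s lam theta a b *m Phi a b) ->
  (* f = f(x^1), g = g(x^2), with the reality conditions of the setting *)
  smoothC f -> smoothC g ->
  (forall a b, D2c s f a b = 0) -> (forall a b, D1c s g a b = 0) ->
  fg_reality s f g ->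
  (* (i) tangent vectors of the immersion function F *)
  (forall a b, D1 s (immersionF s lam f g theta Phi) a b
               = invmx (Phi a b) *m prwC_u1 s lam f g theta a b *m Phi a b) /\
  (forall a b, D2 s (immersionF s lam f g theta Phi) a b
               = invmx (Phi a b) *m prwC_u2 s lam f g theta a b *m Phi a b) /\
  (* (ii) (f u^1 + g u^2) Phi = Phi F, and the deformation is a symmetry *)
  (forall a b, fu_gu s lam f g theta a b *m Phi a b
               = Phi a b *m immersionF s lam f g theta Phi a b) /\
  is_LSP_symmetry s (u1 s lam theta) (u2 s lam theta) Phi
    (prwC_u1 s lam f g theta) (prwC_u2 s lam f g theta)
    (fun a b => fu_gu s lam f g theta a b *m Phi a b).
Proof.
move=> sth thsu hproj EL l1 l2 hreal sPhi PhiSU hP1 hP2 sf sg hf2 hg1 hfg.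
have gth := smoothM_good sth.
have gthT := smoothM_good (smoothM_pM true sth).
have gthF := smoothM_good (smoothM_pM false sth).
have gP := smoothM_good sPhi.
have gf := smoothC_good sf; have gg := smoothC_good sg.
have hu : forall a b, hadj (Phi a b) *m Phi a b = 1%:M.
  by move=> a b; case/andP: (PhiSU a b) => /eqP.
have uP : forall a b, Phi a b \in unitmx.
  by move=> a b; case: (mulmx1_unit (hu a b)).
have EF : immersionF s lam f g theta Phi =
    (fun a b => hadj (Phi a b) *m fu_gu s lam f g theta a b *m Phi a b).
  by apply: funext => a; apply: funext => b; rewrite /immersionF (inv_hadj (hu a b)).
have hsuX := su_fugu hreal hfg.
rewrite D1_DDl u1_Uf in hP1; rewrite D2_DDl u2_Uf in hP2.
rewrite D2c_DDcl in hf2; rewrite D1c_DDcl in hg1.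
rewrite fugu_Xf u1_Uf u2_Uf in hsuX.
rewrite EF /is_LSP_symmetry !D1_DDl !D2_DDl prw1_Pf prw2_Pf charQ_Qf fugu_Xf u1_Uf u2_Uf.
have zc := core_zc gth gthT gthF gP uP hP1 hP2.
have K1 := core_K1 gth gthT gthF gf gg hg1 zc.
have K2 := core_K2 gth gthT gthF gf gg hf2 zc.
have gU1 := goodM_Uf (-2 / (1 + lam)) (coef R s) gth gthT gthF.
have gU2 := goodM_Uf (-2 / (1 - lam)) (- coef R s) gth gthT gthF.
have gX : goodM (Xf f g (Uf (-2 / (1 + lam)) (coef R s) theta) (Uf (-2 / (1 - lam)) (- coef R s) theta)).
  by rewrite XfE; apply: goodM_add; apply: goodM_scal.
have dX := goodM_dM gX; have dP := goodM_dM gP.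
have dh1 := core_dhadj gP hu uP hP1.
have dh2 := core_dhadj gP hu uP hP2.
split.
  move=> a b; rewrite (inv_hadj (hu a b)) K1; exact: (core_T dX dP hP1 dh1).
split.
  move=> a b; rewrite (inv_hadj (hu a b)) K2; exact: (core_T dX dP hP2 dh2).
split.
  by move=> a b; rewrite !mulmxA -(inv_hadj (hu a b)) (mulmxV (uP a b)) mul1mx.
have EK1 : Pf (-2 / (1 + lam)) (coef R s) theta (Qf (coef R s) (- coef R s) f g theta) =
  (fun a b => DDl (coef R s) (Xf f g (Uf (-2 / (1 + lam)) (coef R s) theta) (Uf (-2 / (1 - lam)) (- coef R s) theta)) a b
    + comm (Xf f g (Uf (-2 / (1 + lam)) (coef R s) theta) (Uf (-2 / (1 - lam)) (- coef R s) theta) a b)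
           (Uf (-2 / (1 + lam)) (coef R s) theta a b)).
  by apply: funext => a; apply: funext => b; exact: K1.
have EK2 : Pf (-2 / (1 - lam)) (- coef R s) theta (Qf (coef R s) (- coef R s) f g theta) =
  (fun a b => DDl (- coef R s) (Xf f g (Uf (-2 / (1 + lam)) (coef R s) theta) (Uf (-2 / (1 - lam)) (- coef R s) theta)) a b
    + comm (Xf f g (Uf (-2 / (1 + lam)) (coef R s) theta) (Uf (-2 / (1 - lam)) (- coef R s) theta) a b)
           (Uf (-2 / (1 - lam)) (- coef R s) theta a b)).
  by apply: funext => a; apply: funext => b; exact: K2.
rewrite EK1 EK2.
split.
  exact: (core_S1 gX (goodM_dM gU1) (goodM_dM gU2) zc).
split.
  move=> a b; exact: su_conj (hu a b) (hsuX a b).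
split.
  exact: (core_S dX dP hP1).
exact: (core_S dX dP hP2).
Qed.
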